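(* Let $G=\mathbb{Z}_2\times\mathbb{Z}_4$ and let $\theta_1,\theta_2$ be normalised orthomorphisms of $G$ with $|A_{44}\cap A'_{44}|=1$. Then $\theta_1$ and $\theta_2$ are not orthogonal.
   Context: $G$ is written multiplicatively with identity $e$; $o(g)$ is the order of $g$. A normalised orthomorphism of $G$ is a bijection $\theta\colon G\to G$ with $\theta(e)=e$ such that $x\mapsto x^{-1}\theta(x)$ is a bijection of $G$. Two orthomorphisms are orthogonal if $x\mapsto\theta_1(x)^{-1}\theta_2(x)$ is a bijection of $G$. $A_{44}=\{x: o(x)=4, o(\theta_1(x))=4\}$ and $A'_{44}=\{x: o(x)=4, o(\theta_2(x))=4\}$. *)

(* Defs.v *)
From mathcomp Require Import all_boot all_fingroup all_algebra.
Set Implicit Arguments. Unset Strict Implicit. Unset Printing Implicit Defensive.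

Local Open Scope group_scope.

(* The group Z_2 x Z_4 (direct product of cyclic groups, as a finGroupType;
   the group law of each factor is addition mod n, written multiplicatively). *)
Definition Z2xZ4 : finGroupType := ('Z_2 * 'Z_4)%type.

Definition normalised_orthomorphism (gT : finGroupType) (theta : gT -> gT) : Prop :=
  bijective theta /\ theta 1 = 1 /\ bijective (fun x => x^-1 * theta x).

Definition orthogonal_orth (gT : finGroupType) (theta1 theta2 : gT -> gT) : Prop :=
  bijective (fun x => (theta1 x)^-1 * theta2 x).

Definition A44 (gT : finGroupType) (theta : gT -> gT) : {set gT} :=
  [set x | (#[x] == 4)%N && (#[theta x] == 4)%N].

(* Main.v *)
Require Import Defs.
From mathcomp Require Import all_boot all_fingroup all_algebra.
From mathcomp Require Import cyclic.

Section Gen.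
Variable T : eqType.
Variable q : seq T -> T -> bool.
Variable step : seq T -> seq T.

Fixpoint ext (s : seq T) (n : nat) : seq (seq T) :=
  match n with
  | 0 => [:: s]
  | n'.+1 => flatten [seq ext (rcons s a) n' | a <- [seq a <- step s | q s a]]
  end.

Lemma ext_complete (x0 : T) n : forall s u, size u = n ->
  (forall k, (k < size u)%N -> q (s ++ take k u) (nth x0 u k)) ->
  (forall k, (k < size u)%N -> nth x0 u k \in step (s ++ take k u)) ->
  s ++ u \in ext s n.
Proof.
elim: n => [|n IH] s [|a u] //=.
- by move=> _ _ _; rewrite cats0 mem_seq1.
- move=> [Hs] H1 H2.
  apply/flatten_mapP; exists a.
    rewrite mem_filter.
    have := H1 0%N; rewrite /= cats0 => ->; last by [].
    have := H2 0%N; rewrite /= cats0 => ->; by [].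
  rewrite -cat_rcons; apply: IH => //.
  + move=> k Hk; have := H1 k.+1; rewrite /= cat_rcons; apply. exact Hk.
  + move=> k Hk; have := H2 k.+1; rewrite /= cat_rcons; apply. exact Hk.
Qed.
End Gen.

Local Open Scope group_scope.

Definition I2 : seq 'I_2 := [:: @Ordinal 2 0 isT; @Ordinal 2 1 isT].
Definition I4 : seq 'I_4 :=
  [:: @Ordinal 4 0 isT; @Ordinal 4 1 isT; @Ordinal 4 2 isT; @Ordinal 4 3 isT].
Definition E : seq Z2xZ4 := [seq (i, j) | i <- I2, j <- I4].

Lemma memE (x : Z2xZ4) : x \in E.
Proof.
case: x => i j; apply: allpairs_f.
  by case: i => [[|[|m]] H] //; rewrite !inE -!val_eqE.
by case: j => [[|[|[|[|m]]]] H] //; rewrite !inE -!val_eqE.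
Qed.

Lemma uniqE : uniq E. Proof. by vm_compute. Qed.

Definition T3 : eqType := (Z2xZ4 * (Z2xZ4 * Z2xZ4))%type.

Definition f1 (t : T3) := t.2.1.
Definition f2 (t : T3) := t.2.2.
Definition f3 (t : T3) := t.1^-1 * t.2.1.
Definition f4 (t : T3) := t.1^-1 * t.2.2.
Definition f5 (t : T3) := (t.2.1)^-1 * t.2.2.

Definition qf (s : seq T3) (a : T3) : bool :=
  ((a.1 == 1) ==> (a.2 == (1, 1))) &&
  all (fun b => [&& f1 a != f1 b, f2 a != f2 b, f3 a != f3 b,
                    f4 a != f4 b & f5 a != f5 b]) s.

Definition EE : seq (Z2xZ4 * Z2xZ4) := [seq (y, z) | y <- E, z <- E].

Definition stepf (s : seq T3) : seq T3 := [seq (nth 1 E (size s), yz) | yz <- EE].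

Definition o4 (x : Z2xZ4) : bool := x ^+ 2 != 1.

Definition P4 (t : T3) : bool := [&& o4 t.1, o4 t.2.1 & o4 t.2.2].

Lemma big_check : all (fun t => count P4 t != 1%N) (@ext T3 qf stepf [::] 8).
Proof. vm_compute. reflexivity. Qed.

Lemma exp4 : all (fun x : Z2xZ4 => x ^+ 4 == 1) E. Proof. by vm_compute. Qed.

Lemma o4E (x : Z2xZ4) : (#[x] == 4)%N = o4 x.
Proof.
have h4 : (#[x] %| 4)%N by rewrite order_dvdn; exact: (allP exp4 x (memE x)).
rewrite /o4 -order_dvdn.
have := order_gt0 x.
have : (#[x] <= 4)%N by exact: dvdn_leq.
move: h4; case: #[x] => [|[|[|[|[|m]]]]] //.
Qed.

Lemma fresh_of (f : T3 -> Z2xZ4) (t : seq T3) k x0 : (k < size t)%N ->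
  uniq (map f t) -> all (fun b => f (nth x0 t k) != f b) (take k t).
Proof.
move=> Hk Hu.
have : uniq (map f (take k.+1 t)) by rewrite map_take; apply: take_uniq.
rewrite (take_nth x0 Hk) map_rcons rcons_uniq => /andP [Hn _].
apply/allP => b bin; apply: contra Hn => /eqP ->; exact: map_f.
Qed.

Theorem proposition3 (theta1 theta2 : Z2xZ4 -> Z2xZ4) :
  normalised_orthomorphism theta1 ->
  normalised_orthomorphism theta2 ->
  #|A44 theta1 :&: A44 theta2| = 1%N ->
  ~ orthogonal_orth theta1 theta2.
Proof.
move=> [b1 [n1 c1]] [b2 [n2 c2]] Hc Horth.
set t := [seq (x, (theta1 x, theta2 x)) : T3 | x <- E].
have Hu : forall f : Z2xZ4 -> Z2xZ4, bijective f -> uniq [seq f x | x <- E].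
  by move=> f /bij_inj fi; rewrite map_inj_uniq // uniqE.
have Hsz : size t = 8%N by rewrite size_map.
have U1 : uniq (map f1 t) by rewrite /t -map_comp; exact: Hu b1.
have U2 : uniq (map f2 t) by rewrite /t -map_comp; exact: Hu b2.
have U3 : uniq (map f3 t) by rewrite /t -map_comp; exact: Hu c1.
have U4 : uniq (map f4 t) by rewrite /t -map_comp; exact: Hu c2.
have U5 : uniq (map f5 t) by rewrite /t -map_comp; exact: Hu Horth.
have Hin : t \in @ext T3 qf stepf [::] 8.
  apply: (@ext_complete T3 qf stepf (1, (1, 1)) 8 [::] t) => //.
  - move=> k Hk; rewrite /= /qf; apply/andP; split.
      rewrite /t (nth_map 1); last by move: Hk; rewrite /t size_map.
      by apply/implyP => /= /eqP ->; rewrite n1 n2.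
    have A1 := fresh_of _ _ _ (1, (1, 1)) Hk U1.
    have A2 := fresh_of _ _ _ (1, (1, 1)) Hk U2.
    have A3 := fresh_of _ _ _ (1, (1, 1)) Hk U3.
    have A4 := fresh_of _ _ _ (1, (1, 1)) Hk U4.
    have A5 := fresh_of _ _ _ (1, (1, 1)) Hk U5.
    apply/allP => b bin.
    by rewrite (allP A1 b bin) (allP A2 b bin) (allP A3 b bin)
               (allP A4 b bin) (allP A5 b bin).
  - move=> k Hk; rewrite /stepf ?cat0s size_take Hk.
    rewrite /t (nth_map 1); last by move: Hk; rewrite /t size_map.
    apply/mapP; exists (theta1 (nth 1 E k), theta2 (nth 1 E k)) => //.
    apply: allpairs_f; exact: memE.
have := allP big_check t Hin.
suff -> : count P4 t = 1%N by [].
rewrite -Hc.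
set A := A44 theta1 :&: A44 theta2.
have -> : #|A| = size [seq x <- E | x \in A].
  rewrite -(card_uniqP _); last by rewrite filter_uniq // uniqE.
  by apply: eq_card => x; rewrite mem_filter memE andbT.
rewrite size_filter /t count_map; apply: eq_count => x /=.
rewrite /A !inE /P4 /= !o4E.
by case: (o4 x); rewrite ?andbb //= ?andbA.
Qed.
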